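(* Let QS4 be the modal predicate calculus obtained from classical predicate calculus by adding a unary connective $\Box$ with axiom schemes $\Box p\to p$, $\Box p\to\Box\Box p$, $\Box(p\to q)\to(\Box p\to\Box q)$ and the rule $p\,/\,\Box p$. Define a translation $A\mapsto A_\Box$ from formulas of QHC to formulas of QS4 by recursion: atomic propositions are unchanged, and $0_\Box=0$; $\bot_\Box=0$; each atomic problem $\pi(t_1,\dots,t_n)\neq\bot$ is sent to $\Box\bar\pi(t_1,\dots,t_n)$, where $\bar\pi$ is a proposition variable of the same arity assigned injectively to $\pi$ (and distinct from the proposition variables of QHC); classical connectives and quantifiers are kept; intuitionistic $\land,\lor,\exists$ become the classical ones ($(\alpha\land\beta)_\Box=\alpha_\Box\land\beta_\Box$, etc.); intuitionistic $\to$ and $\forall$ become classical and prefixed by $\Box$: $(\alpha\to\beta)_\Box=\Box(\alpha_\Box\to\beta_\Box)$, $(\forall x\,\alpha)_\Box=\Box\forall x\,\alpha_\Box$; $(?\alpha)_\Box=\alpha_\Box$; $(!p)_\Box=\Box p_\Box$. Then if $A_1,\dots,A_n\vdash_{\mathrm{QHC}} A$, we have $(A_1)_\Box,\dots,(A_n)_\Box\vdash_{\mathrm{QS4}} A_\Box$.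
   Context: QHC is a two-sorted first-order calculus. Its only terms are individual variables. Every formula is either a problem (denoted by Greek letters $\alpha,\beta,\gamma,\dots$) or a proposition (denoted by Latin letters $p,q,\dots$). Atomic formulas are proposition variables $p(t_1,\dots,t_n)$ (of proposition type), problem variables $\pi(t_1,\dots,t_n)$ (of problem type), and the constants $0$ (a proposition, classical falsity) and $\bot$ (a problem, intuitionistic absurdity). Propositions are closed under the classical connectives $\land,\lor,\to$ and quantifiers $\exists,\forall$; problems are closed under the intuitionistic connectives $\land,\lor,\to$ and quantifiers $\exists,\forall$ (the same symbols are used, distinguished by the type of the arguments). $\neg p$ abbreviates $p\to 0$, $\neg\alpha$ abbreviates $\alpha\to\bot$, and $\leftrightarrow$ is defined as usual. There are two type-conversion operators: if $p$ is a proposition then $!p$ is a problem, and if $\alpha$ is a problem then $?\alpha$ is a proposition. Deductive system of QHC: all axioms and rules of classical predicate logic applied to all propositions; all postulates and rules of intuitionistic predicate logic applied to all problems; the rules $p\,/\,!p$ and $\alpha\,/\,?\alpha$; and the schemas $?!p\to p$; $\alpha\to\, !?\alpha$; $!(p\to q)\to(!p\to !q)$; $?(\alpha\to\beta)\to(?\alpha\to ?\beta)$; $!0\to\bot$; $?(\alpha\land\beta)\leftrightarrow ?\alpha\land ?\beta$; $?(\alpha\lor\beta)\leftrightarrow ?\alpha\lor ?\beta$; $?\bot\to 0$; $?\exists x\,\alpha(x)\leftrightarrow\exists x\,?\alpha(x)$; $?\forall x\,\alpha(x)\to\forall x\,?\alpha(x)$ (usual variable side conditions implicit). $\vdash A$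 means $A$ is derivable in QHC; $A\Rightarrow B$ means $\vdash A\to B$ and $A\Leftrightarrow B$ means $\vdash A\leftrightarrow B$ (with $A,B$ of the same type); $A\vdash B$ means $B$ is derivable in QHC from the premise $A$. Notation: $\Box p := ?!p$ (a proposition) and $\nabla\alpha := !?\alpha$ (a problem). QC and QH denote classical and intuitionistic predicate calculus. *)

(* Defs.v *)
From Stdlib Require Import List.
Import ListNotations.

(* Individual variables are de Bruijn indices (nat); the only terms are variables.
   Atomic formulas: variable name (nat) applied to a list of argument variables. *)

Inductive prop : Type :=
| PVar  : nat -> list nat -> prop
| PFalse : prop
| PAnd  : prop -> prop -> prop
| POr   : prop -> prop -> prop
| PImp  : prop -> prop -> prop
| PEx   : prop -> prop                 (* binds de Bruijn index 0 *)
| PAll  : prop -> prop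
| PQue  : prob -> prop
with prob : Type :=
| QVar  : nat -> list nat -> prob
| QBot  : prob
| QAnd  : prob -> prob -> prob
| QOr   : prob -> prob -> prob
| QImp  : prob -> prob -> prob
| QEx   : prob -> prob
| QAll  : prob -> prob
| QBang : prop -> prob.

Inductive qform : Type :=
| Fp : prop -> qform
| Fq : prob -> qform.

Definition up (f : nat -> nat) : nat -> nat :=
  fun n => match n with 0 => 0 | S k => S (f k) end.

Fixpoint renP (f : nat -> nat) (p : prop) : prop :=
  match p with
  | PVar n ts => PVar n (map f ts)
  | PFalse => PFalse
  | PAnd a b => PAnd (renP f a) (renP f b)
  | POr a b => POr (renP f a) (renP f b)
  | PImp a b => PImp (renP f a) (renP f b)
  | PEx a => PEx (renP (up f) a)
  | PAll a => PAll (renP (up f) a)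
  | PQue a => PQue (renQ f a)
  end
with renQ (f : nat -> nat) (a : prob) : prob :=
  match a with
  | QVar n ts => QVar n (map f ts)
  | QBot => QBot
  | QAnd a b => QAnd (renQ f a) (renQ f b)
  | QOr a b => QOr (renQ f a) (renQ f b)
  | QImp a b => QImp (renQ f a) (renQ f b)
  | QEx a => QEx (renQ (up f) a)
  | QAll a => QAll (renQ (up f) a)
  | QBang p => QBang (renP f p)
  end.

Definition inst (y : nat) : nat -> nat :=
  fun n => match n with 0 => y | S k => k end.

Definition substP (y : nat) (p : prop) : prop := renP (inst y) p.
Definition substQ (y : nat) (a : prob) : prob := renQ (inst y) a.
(* weakening: the formula does not contain the newly bound variable 0 *)
Definition liftP (p : prop) : prop := renP S p.
Definition liftQ (a : prob) : prob := renQ S a.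

Definition PIff (p q : prop) : prop := PAnd (PImp p q) (PImp q p).

Inductive QHC (G : list qform) : qform -> Prop :=
| qhc_hyp A : In A G -> QHC G A
| cl_K p q : QHC G (Fp (PImp p (PImp q p)))
| cl_S p q r : QHC G (Fp (PImp (PImp p (PImp q r)) (PImp (PImp p q) (PImp p r))))
| cl_andE1 p q : QHC G (Fp (PImp (PAnd p q) p))
| cl_andE2 p q : QHC G (Fp (PImp (PAnd p q) q))
| cl_andI p q : QHC G (Fp (PImp p (PImp q (PAnd p q))))
| cl_orI1 p q : QHC G (Fp (PImp p (POr p q)))
| cl_orI2 p q : QHC G (Fp (PImp q (POr p q)))
| cl_orE p q r : QHC G (Fp (PImp (PImp p r) (PImp (PImp q r) (PImp (POr p q) r))))
| cl_efq p : QHC G (Fp (PImp PFalse p))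
| cl_dne p : QHC G (Fp (PImp (PImp (PImp p PFalse) PFalse) p))
| cl_allE p y : QHC G (Fp (PImp (PAll p) (substP y p)))
| cl_exI p y : QHC G (Fp (PImp (substP y p) (PEx p)))
| cl_allI p q : QHC G (Fp (PImp (PAll (PImp (liftP q) p)) (PImp q (PAll p))))
| cl_exE p q : QHC G (Fp (PImp (PAll (PImp p (liftP q))) (PImp (PEx p) q)))
| cl_mp p q : QHC G (Fp (PImp p q)) -> QHC G (Fp p) -> QHC G (Fp q)
| cl_gen p : QHC G (Fp p) -> QHC G (Fp (PAll p))
| in_K a b : QHC G (Fq (QImp a (QImp b a)))
| in_S a b c : QHC G (Fq (QImp (QImp a (QImp b c)) (QImp (QImp a b) (QImp a c))))
| in_andE1 a b : QHC G (Fq (QImp (QAnd a b) a))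
| in_andE2 a b : QHC G (Fq (QImp (QAnd a b) b))
| in_andI a b : QHC G (Fq (QImp a (QImp b (QAnd a b))))
| in_orI1 a b : QHC G (Fq (QImp a (QOr a b)))
| in_orI2 a b : QHC G (Fq (QImp b (QOr a b)))
| in_orE a b c : QHC G (Fq (QImp (QImp a c) (QImp (QImp b c) (QImp (QOr a b) c))))
| in_efq a : QHC G (Fq (QImp QBot a))
| in_allE a y : QHC G (Fq (QImp (QAll a) (substQ y a)))
| in_exI a y : QHC G (Fq (QImp (substQ y a) (QEx a)))
| in_allI a b : QHC G (Fq (QImp (QAll (QImp (liftQ b) a)) (QImp b (QAll a))))
| in_exE a b : QHC G (Fq (QImp (QAll (QImp a (liftQ b))) (QImp (QEx a) b)))
| in_mp a b : QHC G (Fq (QImp a b)) -> QHC G (Fq a) -> QHC G (Fq b)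
| in_gen a : QHC G (Fq a) -> QHC G (Fq (QAll a))
| r_bang p : QHC G (Fp p) -> QHC G (Fq (QBang p))
| r_que a : QHC G (Fq a) -> QHC G (Fp (PQue a))
| x_quebang p : QHC G (Fp (PImp (PQue (QBang p)) p))
| x_bangque a : QHC G (Fq (QImp a (QBang (PQue a))))
| x_bangK p q : QHC G (Fq (QImp (QBang (PImp p q)) (QImp (QBang p) (QBang q))))
| x_queK a b : QHC G (Fp (PImp (PQue (QImp a b)) (PImp (PQue a) (PQue b))))
| x_bang0 : QHC G (Fq (QImp (QBang PFalse) QBot))
| x_queAnd a b : QHC G (Fp (PIff (PQue (QAnd a b)) (PAnd (PQue a) (PQue b))))
| x_queOr a b : QHC G (Fp (PIff (PQue (QOr a b)) (POr (PQue a) (PQue b))))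
| x_queBot : QHC G (Fp (PImp (PQue QBot) PFalse))
| x_queEx a : QHC G (Fp (PIff (PQue (QEx a)) (PEx (PQue a))))
| x_queAll a : QHC G (Fp (PImp (PQue (QAll a)) (PAll (PQue a)))).

Inductive mform : Type :=
| MVar : nat -> list nat -> mform
| MFalse : mform
| MAnd : mform -> mform -> mform
| MOr : mform -> mform -> mform
| MImp : mform -> mform -> mform
| MEx : mform -> mform
| MAll : mform -> mform
| MBox : mform -> mform.

Fixpoint renM (f : nat -> nat) (m : mform) : mform :=
  match m with
  | MVar n ts => MVar n (map f ts)
  | MFalse => MFalse
  | MAnd a b => MAnd (renM f a) (renM f b)
  | MOr a b => MOr (renM f a) (renM f b)
  | MImp a b => MImp (renM f a) (renM f b)
  | MEx a => MEx (renM (up f) a)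
  | MAll a => MAll (renM (up f) a)
  | MBox a => MBox (renM f a)
  end.

Definition substM (y : nat) (m : mform) : mform := renM (inst y) m.
Definition liftM (m : mform) : mform := renM S m.

Inductive QS4 (G : list mform) : mform -> Prop :=
| s4_hyp A : In A G -> QS4 G A
| s4_K p q : QS4 G (MImp p (MImp q p))
| s4_S p q r : QS4 G (MImp (MImp p (MImp q r)) (MImp (MImp p q) (MImp p r)))
| s4_andE1 p q : QS4 G (MImp (MAnd p q) p)
| s4_andE2 p q : QS4 G (MImp (MAnd p q) q)
| s4_andI p q : QS4 G (MImp p (MImp q (MAnd p q)))
| s4_orI1 p q : QS4 G (MImp p (MOr p q))
| s4_orI2 p q : QS4 G (MImp q (MOr p q))
| s4_orE p q r : QS4 G (MImp (MImp p r) (MImp (MImp q r) (MImp (MOr p q) r)))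
| s4_efq p : QS4 G (MImp MFalse p)
| s4_dne p : QS4 G (MImp (MImp (MImp p MFalse) MFalse) p)
| s4_allE p y : QS4 G (MImp (MAll p) (substM y p))
| s4_exI p y : QS4 G (MImp (substM y p) (MEx p))
| s4_allI p q : QS4 G (MImp (MAll (MImp (liftM q) p)) (MImp q (MAll p)))
| s4_exE p q : QS4 G (MImp (MAll (MImp p (liftM q))) (MImp (MEx p) q))
| s4_mp p q : QS4 G (MImp p q) -> QS4 G p -> QS4 G q
| s4_gen p : QS4 G p -> QS4 G (MAll p)
| s4_T p : QS4 G (MImp (MBox p) p)
| s4_4 p : QS4 G (MImp (MBox p) (MBox (MBox p)))
| s4_Kbox p q : QS4 G (MImp (MBox (MImp p q)) (MImp (MBox p) (MBox q)))
| s4_nec p : QS4 G p -> QS4 G (MBox p).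

(* ---------- The translation A |-> A_Box ----------
   proposition variable p_n  |-> proposition variable number 2n
   problem variable pi_n     |-> Box (proposition variable number 2n+1)
   (injective, and the images of problem variables are distinct from those of
   proposition variables). *)
Fixpoint trP (p : prop) : mform :=
  match p with
  | PVar n ts => MVar (2 * n) ts
  | PFalse => MFalse
  | PAnd a b => MAnd (trP a) (trP b)
  | POr a b => MOr (trP a) (trP b)
  | PImp a b => MImp (trP a) (trP b)
  | PEx a => MEx (trP a)
  | PAll a => MAll (trP a)
  | PQue a => trQ a
  end
with trQ (a : prob) : mform :=
  match a with
  | QVar n ts => MBox (MVar (S (2 * n)) ts)
  | QBot => MFalse
  | QAnd a b => MAnd (trQ a) (trQ b)
  | QOr a b => MOr (trQ a) (trQ b)
  | QImp a b => MBox (MImp (trQ a) (trQ b))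
  | QEx a => MEx (trQ a)
  | QAll a => MBox (MAll (trQ a))
  | QBang p => MBox (trP p)
  end.

Definition tr (A : qform) : mform :=
  match A with Fp p => trP p | Fq a => trQ a end.

(* Main.v *)
Require Import Defs.
From Stdlib Require Import List.
Import ListNotations.

Scheme prop_ind2 := Induction for prop Sort Prop
with prob_ind2 := Induction for prob Sort Prop.
Combined Scheme pp_ind from prop_ind2, prob_ind2.

Lemma tr_ren : forall f,
  (forall p, trP (renP f p) = renM f (trP p)) /\
  (forall a, trQ (renQ f a) = renM f (trQ a)).
Proof.
  intro f.
  assert (H : (forall p f, trP (renP f p) = renM f (trP p)) /\
              (forall a f, trQ (renQ f a) = renM f (trQ a))).
  { apply pp_ind; intros; simpl; try congruence. }
  destruct H as [H1 H2]; split; auto.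
Qed.

Lemma trP_subst y p : trP (substP y p) = substM y (trP p).
Proof. apply tr_ren. Qed.
Lemma trQ_subst y a : trQ (substQ y a) = substM y (trQ a).
Proof. apply tr_ren. Qed.
Lemma trP_lift p : trP (liftP p) = liftM (trP p).
Proof. apply tr_ren. Qed.
Lemma trQ_lift a : trQ (liftQ a) = liftM (trQ a).
Proof. apply tr_ren. Qed.

Lemma renM_inv : forall m f g, (forall n, g (f n) = n) -> renM g (renM f m) = m.
Proof.
  induction m; intros f g Hfg; simpl; try (f_equal; eauto; fail).
  all: try (f_equal; rewrite map_map; clear n; induction l; simpl; congruence).
  all: f_equal; apply IHm; intros [|n]; simpl; auto; rewrite Hfg; auto.
Qed.
Lemma inst_lift m : substM 0 (renM (up S) m) = m.
Proof. apply renM_inv. intros [|n]; reflexivity. Qed.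

Definition Th X := forall G, QS4 G X.

Inductive Der (H : list mform) : mform -> Prop :=
| dh X : In X H -> Der H X
| dth X : Th X -> Der H X
| dmp X Y : Der H (MImp X Y) -> Der H X -> Der H Y.

Lemma th_I X : Th (MImp X X).
Proof.
  intro G. eapply s4_mp. eapply s4_mp. apply (s4_S G X (MImp X X) X).
  apply s4_K. apply s4_K.
Qed.

Lemma ded h H X : Der (h :: H) X -> Der H (MImp h X).
Proof.
  induction 1.
  - destruct H0 as [<-|Hi].
    + apply dth, th_I.
    + eapply dmp. apply dth. intro G; apply s4_K. apply dh; auto.
  - eapply dmp. apply dth. intro G; apply s4_K. apply dth; auto.
  - eapply dmp. eapply dmp. apply dth. intro G; apply s4_S. eauto. eauto.
Qed.

Lemma der_th X : Der [] X -> Th X.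
Proof.
  induction 1.
  - destruct H.
  - auto.
  - intro G. eapply s4_mp; eauto.
Qed.

Lemma th1 A B : Der [A] B -> Th (MImp A B).
Proof. intro; apply der_th, ded; auto. Qed.
Lemma th2 A B C : Der [B; A] C -> Th (MImp A (MImp B C)).
Proof. intro; apply der_th, ded, ded; auto. Qed.
Lemma th3 A B C D : Der [C; B; A] D -> Th (MImp A (MImp B (MImp C D))).
Proof. intro; apply der_th, ded, ded, ded; auto. Qed.

Lemma dmp1 H X Y : Th (MImp X Y) -> Der H X -> Der H Y.
Proof. intros; eapply dmp; [apply dth; eauto| eauto]. Qed.
Lemma dmp2 H X Y Z : Th (MImp X (MImp Y Z)) -> Der H X -> Der H Y -> Der H Z.
Proof. intros; eapply dmp; [eapply dmp1; eauto| eauto]. Qed.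

Ltac hyp := apply dh; simpl; tauto.
Tactic Notation "h" int_or_var(n) := (apply dh; simpl; do n right; left; reflexivity).
Ltac ax c := intro G; apply c.

Lemma th_nec X : Th X -> Th (MBox X).
Proof. intros H G; apply s4_nec, H. Qed.

Lemma box_mono H X Y : Th (MImp X Y) -> Der H (MBox X) -> Der H (MBox Y).
Proof. intros. eapply dmp1; [|eauto]. intro G. eapply s4_mp. apply s4_Kbox. apply s4_nec, H0. Qed.

Lemma box_mono2 H X Y Z : Th (MImp X (MImp Y Z)) -> Der H (MBox X) -> Der H (MBox Y) -> Der H (MBox Z).
Proof.
  intros HT H1 H2.
  assert (Der H (MBox (MImp Y Z))) by (eapply box_mono; eauto).
  eapply dmp2. ax s4_Kbox. eauto. eauto.
Qed.

Lemma dT H X : Der H (MBox X) -> Der H X.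
Proof. apply dmp1. ax s4_T. Qed.

Lemma boxlift P Q : Th (MImp (MBox P) Q) -> Th (MImp (MBox P) (MBox Q)).
Proof.
  intro. apply th1. eapply box_mono. eauto. eapply dmp1. ax s4_4. hyp.
Qed.

Lemma th_dist X Y : Th (MImp (MAll (MImp X Y)) (MImp (MAll X) (MAll Y))).
Proof.
  set (Q := MAnd (MAll (MImp X Y)) (MAll X)).
  assert (HQ : Th (MAll (MImp (liftM Q) Y))).
  { intro G. apply s4_gen. revert G. apply th1. simpl.
    assert (E1 : Der [liftM Q] (MImp X Y)).
    { rewrite <- (inst_lift (MImp X Y)). eapply dmp1. ax s4_allE.
      eapply dmp1. ax s4_andE1. hyp. }
    assert (E2 : Der [liftM Q] X).
    { rewrite <- (inst_lift X). eapply dmp1. ax s4_allE.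
      eapply dmp1. ax s4_andE2. hyp. }
    eapply dmp; eauto. }
  apply th2. eapply dmp. eapply dmp1. ax s4_allI. apply dth; eauto.
  unfold Q. eapply dmp2. ax s4_andI. hyp. hyp.
Qed.

Lemma stable a : Th (MImp (trQ a) (MBox (trQ a))).
Proof.
  induction a; simpl; try (ax s4_4).
  - ax s4_efq.
  - apply th1. eapply box_mono2. ax s4_andI.
    eapply dmp1. eauto. eapply dmp1. ax s4_andE1. hyp.
    eapply dmp1. eauto. eapply dmp1. ax s4_andE2. hyp.
  - eapply der_th. eapply dmp2. ax s4_orE.
    + apply ded. eapply box_mono. ax s4_orI1. eapply dmp1; eauto. hyp.
    + apply ded. eapply box_mono. ax s4_orI2. eapply dmp1; eauto. hyp.
  - apply der_th. eapply dmp1. ax s4_exE. apply dth. intro G. apply s4_gen. revert G.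
    apply th1. simpl. eapply box_mono.
    2:{ eapply dmp1. eauto. hyp. }
    rewrite <- (inst_lift (trQ a)) at 1. ax s4_exI.
Qed.

Lemma th_G G X : Th X -> QS4 G X.
Proof. auto. Qed.

Theorem theorem3p1 (Gamma : list qform) (A : qform) :
  QHC Gamma A -> QS4 (map tr Gamma) (tr A).
Proof.
  induction 1; simpl in *;
    try rewrite ?trP_subst, ?trQ_subst, ?trP_lift, ?trQ_lift in *.
  1: { apply s4_hyp, in_map; auto. }
  all: try (first [apply s4_K | apply s4_S | apply s4_andE1 | apply s4_andE2 | apply s4_andI
     | apply s4_orI1 | apply s4_orI2 | apply s4_orE | apply s4_efq | apply s4_dne | apply s4_allE
     | apply s4_exI | apply s4_allI | apply s4_exE | apply s4_T | apply s4_nec; auto]; fail).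
  all: try (eapply s4_mp; eauto; fail).
  all: try (apply s4_gen; auto; fail).
  all: try (eapply s4_mp; [eapply s4_mp; [apply s4_T| eauto] | eauto]; fail).
  all: try (apply s4_nec, s4_gen; auto; fail).
  all: try assumption.
  all: apply th_G.
  - apply th_nec, th1. eapply box_mono. ax s4_K. eapply dmp1. apply stable. hyp.
  - apply th_nec, boxlift, th2. eapply box_mono2; [ | h 1 | h 0 ].
    apply th3. apply (dmp _ (trQ b)).
    + apply dT. apply (dmp _ (trQ a)); [h 2 | h 0].
    + apply (dmp _ (trQ a)); [h 1 | h 0].
  - apply th_nec; ax s4_andE1.
  - apply th_nec; ax s4_andE2.
  - apply th_nec, th1. eapply box_mono. ax s4_andI. eapply dmp1. apply stable. hyp.
  - apply th_nec; ax s4_orI1.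
  - apply th_nec; ax s4_orI2.
  - apply th_nec, boxlift, th2. eapply box_mono2. ax s4_orE. hyp. hyp.
  - apply th_nec; ax s4_efq.
  - apply th_nec, th1. eapply dmp1. ax s4_allE. apply dT. hyp.
  - apply th_nec; ax s4_exI.
  - apply th_nec, boxlift, th2. eapply box_mono2.
    2:{ eapply dmp1. apply stable. hyp. } 2: hyp.
    apply th2. eapply dmp. eapply dmp1. ax s4_allI.
    eapply dmp. eapply dmp1. apply th_dist. apply dth. intro G0. apply s4_gen. apply s4_T.
    hyp. hyp.
  - apply th_nec, th1. eapply box_mono. 2: hyp.
    apply th1. eapply dmp1. ax s4_exE.
    eapply dmp. eapply dmp1. apply th_dist. apply dth. intro G0. apply s4_gen. apply s4_T.
    hyp.
  - apply th_nec. apply stable.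
  - apply th_nec, boxlift. ax s4_Kbox.
  - apply th_nec. ax s4_T.
  - apply der_th; eapply dmp2; [ax s4_andI | apply dth, th_I | apply dth, th_I].
  - apply der_th; eapply dmp2; [ax s4_andI | apply dth, th_I | apply dth, th_I].
  - apply der_th; eapply dmp2; [ax s4_andI | apply dth, th_I | apply dth, th_I].
Qed.
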